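(* Let $n\ge2$ and let $\eta$ be a unit vector in the algebraic linear span of $\{\xi_w:w\in\mathbb{F}_n^*\}$ in $F_n^2$. Then there are words $u,v\in\mathbb{F}_n^*$ such that $$L_uR_v\eta=L\xi_\varnothing=R\xi_\varnothing,$$ where $L$ is an isometry in $\mathcal{L}_n$ and $R$ is an isometry in $\mathcal{R}_n$ whose range is orthogonal to the range of $R_1$.
   Context: $F_n^2$ is the full Fock space over $\mathbb{C}^n$ with orthonormal basis $\{\xi_w:w\in\mathbb{F}_n^*\}$, where $\mathbb{F}_n^*$ is the unital free semigroup on letters $1,\dots,n$ with empty word $\varnothing$ ($\xi_\varnothing$ the vacuum vector). $L_i\xi_w=\xi_{iw}$, $R_i\xi_w=\xi_{wi}$; for $w=w_1\cdots w_k$, $L_w=L_{w_1}\cdots L_{w_k}$ and $R_w=R_{w_1}\cdots R_{w_k}$. $\mathcal{L}_n$ and $\mathcal{R}_n$ are the weakly closed unital algebras generated by $L_1,\dots,L_n$ and by $R_1,\dots,R_n$ respectively. *)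

(* Defs.v *)
From Stdlib Require Import Reals Lra List Arith.
Import ListNotations.
Open Scope R_scope.

Record C := mkC { re : R; im : R }.
Definition C0 : C := mkC 0 0.
Definition C1 : C := mkC 1 0.
Definition RtoC (r : R) : C := mkC r 0.
Definition Cadd (a b : C) : C := mkC (re a + re b) (im a + im b).
Definition Copp (a : C) : C := mkC (- re a) (- im a).
Definition Csub (a b : C) : C := Cadd a (Copp b).
Definition Cmul (a b : C) : C :=
  mkC (re a * re b - im a * im b) (re a * im b + im a * re b).
Definition Cconj (a : C) : C := mkC (re a) (- im a).
Definition Cnorm2 (a : C) : R := re a * re a + im a * im a.
Definition Cabs (a : C) : R := sqrt (Cnorm2 a).

(* ---------- Words of the free semigroup F_n^* ----------
   Letters 1..n of the paper are encoded as the naturals 0..n-1;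
   a word is a list of letters; the empty word is [].            *)
Definition word := list nat.
Definition valid_word (n : nat) (w : word) : Prop := Forall (fun i => (i < n)%nat) w.

(* ---------- Vectors: functions word -> C (coefficients w.r.t. xi_w) ---------- *)
Definition vec := word -> C.
Definition vzero : vec := fun _ => C0.
Definition vadd (x y : vec) : vec := fun w => Cadd (x w) (y w).
Definition vscale (c : C) (x : vec) : vec := fun w => Cmul c (x w).

Definition xi_empty : vec := fun w => match w with [] => C1 | _ => C0 end.

Definition lsum (f : word -> C) (S : list word) : C :=
  fold_right (fun w acc => Cadd (f w) acc) C0 S.

Definition has_sum (f : word -> C) (s : C) : Prop :=
  forall eps, 0 < eps ->
    exists S0 : list word, forall S : list word,
      NoDup S -> incl S0 S -> Cabs (Csub (lsum f S) s) < eps.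

Definition hasnorm2 (x : vec) (r : R) : Prop :=
  has_sum (fun w => RtoC (Cnorm2 (x w))) (RtoC r).

(* <x, y> = s (linear in the first variable) *)
Definition hasinner (x y : vec) (s : C) : Prop :=
  has_sum (fun w => Cmul (x w) (Cconj (y w))) s.

Definition supported (n : nat) (x : vec) : Prop :=
  forall w, ~ valid_word n w -> x w = C0.

Definition fock (n : nat) (x : vec) : Prop :=
  supported n x /\ exists r, hasnorm2 x r.

Definition in_alg_span (n : nat) (x : vec) : Prop :=
  supported n x /\ exists S : list word, forall w, ~ In w S -> x w = C0.

Definition op := vec -> vec.
Definition op_id : op := fun x => x.
Definition op_comp (A B : op) : op := fun x => A (B x).
Definition op_add (A B : op) : op := fun x => vadd (A x) (B x).
Definition op_scale (c : C) (A : op) : op := fun x => vscale c (A x).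

Definition bounded_op (n : nat) (T : op) : Prop :=
  (forall x, fock n x -> fock n (T x)) /\
  (forall x y, fock n x -> fock n y -> T (vadd x y) = vadd (T x) (T y)) /\
  (forall c x, fock n x -> T (vscale c x) = vscale c (T x)) /\
  (exists M, 0 <= M /\ forall x r r', fock n x -> hasnorm2 x r ->
      hasnorm2 (T x) r' -> r' <= M * r).

Definition isometry (n : nat) (T : op) : Prop :=
  bounded_op n T /\ forall x r, fock n x -> hasnorm2 x r -> hasnorm2 (T x) r.

(* L_i xi_w = xi_{iw} *)
Definition Lop (i : nat) : op := fun x w =>
  match w with
  | j :: w' => if Nat.eqb j i then x w' else C0
  | [] => C0
  end.

(* R_i xi_w = xi_{wi} *)
Definition Rop (i : nat) : op := fun x w =>
  match rev w with
  | j :: rw' => if Nat.eqb j i then x (rev rw') else C0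
  | [] => C0
  end.

Definition Lword (u : word) : op := fold_right (fun i T => op_comp (Lop i) T) op_id u.
Definition Rword (v : word) : op := fold_right (fun i T => op_comp (Rop i) T) op_id v.

(* A basic WOT-neighbourhood of T is given by finitely many pairs (x_k, y_k)
   and eps > 0: { A : |<(A - T) x_k, y_k>| < eps for all k }. *)
Definition wot_closed (n : nat) (S : op -> Prop) : Prop :=
  forall T, bounded_op n T ->
    (forall (ps : list (vec * vec)) (eps : R), 0 < eps ->
       Forall (fun p => fock n (fst p) /\ fock n (snd p)) ps ->
       exists A, S A /\
         Forall (fun p => exists s,
                   hasinner (fun w => Csub (A (fst p) w) (T (fst p) w)) (snd p) s
                   /\ Cabs s < eps) ps) ->
    S T.

Definition unital_algebra (n : nat) (S : op -> Prop) : Prop :=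
  (forall A, S A -> bounded_op n A) /\
  S op_id /\
  (forall A B, S A -> S B -> S (op_add A B)) /\
  (forall c A, S A -> S (op_scale c A)) /\
  (forall A B, S A -> S B -> S (op_comp A B)).

Definition weakly_closed_alg_gen (n : nat) (gen : op -> Prop) (T : op) : Prop :=
  bounded_op n T /\
  forall S, unital_algebra n S -> wot_closed n S ->
    (forall G, gen G -> S G) -> S T.

Definition Lalg (n : nat) : op -> Prop :=
  weakly_closed_alg_gen n (fun G => exists i, (i < n)%nat /\ G = Lop i).
Definition Ralg (n : nat) : op -> Prop :=
  weakly_closed_alg_gen n (fun G => exists i, (i < n)%nat /\ G = Rop i).

Definition ranges_orthogonal (n : nat) (A B : op) : Prop :=
  forall x y, fock n x -> fock n y -> hasinner (A x) (B y) C0.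

(* Main.v *)
Require Import Defs.
From Stdlib Require Import Reals Lra List Arith Lia Permutation Classical FunctionalExtensionality.
Import ListNotations.
Import Defs.
Open Scope R_scope.

Lemma Ceq_intro (a b : C) : re a = re b -> im a = im b -> a = b.
Proof. destruct a, b; simpl; intros; subst; reflexivity. Qed.
Ltac ceq := apply Ceq_intro; simpl; ring.

Definition lsumR (f : word -> R) (S : list word) : R :=
  fold_right (fun w acc => f w + acc) 0 S.

Definition has_sumR (f : word -> R) (s : R) : Prop :=
  forall eps, 0 < eps -> exists S0 : list word, forall S,
    NoDup S -> incl S0 S -> Rabs (lsumR f S - s) < eps.

Lemma lsum_RtoC g S : lsum (fun w => RtoC (g w)) S = RtoC (lsumR g S).
Proof. induction S; simpl. reflexivity. rewrite IHS. ceq. Qed.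

Lemma Cabs_RtoC a b : Cabs (Csub (RtoC a) (RtoC b)) = Rabs (a - b).
Proof.
  unfold Cabs, Cnorm2, Csub, Cadd, Copp, RtoC; simpl.
  rewrite <- sqrt_Rsqr_abs. f_equal. unfold Rsqr. ring.
Qed.

Lemma hasnorm2_iff x r : hasnorm2 x r <-> has_sumR (fun w => Cnorm2 (x w)) r.
Proof.
  unfold hasnorm2, has_sum, has_sumR; split; intros H eps He;
  destruct (H eps He) as [S0 HS0]; exists S0; intros S H1 H2;
  specialize (HS0 S H1 H2); rewrite lsum_RtoC, Cabs_RtoC in *; auto.
Qed.

Lemma has_sumR_unique f a b : has_sumR f a -> has_sumR f b -> a = b.
Proof.
  intros Ha Hb. destruct (Rtotal_order a b) as [H|[H|H]]; auto; exfalso.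
  - destruct (Ha ((b-a)/2)) as [S1 H1]; [lra|].
    destruct (Hb ((b-a)/2)) as [S2 H2]; [lra|].
    set (S := nodup (list_eq_dec Nat.eq_dec) (S1 ++ S2)).
    assert (HN : NoDup S) by apply NoDup_nodup.
    assert (I1 : incl S1 S) by (intros w Hw; apply nodup_In, in_or_app; auto).
    assert (I2 : incl S2 S) by (intros w Hw; apply nodup_In, in_or_app; auto).
    specialize (H1 S HN I1); specialize (H2 S HN I2).
    apply Rabs_def2 in H1; apply Rabs_def2 in H2; lra.
  - destruct (Ha ((a-b)/2)) as [S1 H1]; [lra|].
    destruct (Hb ((a-b)/2)) as [S2 H2]; [lra|].
    set (S := nodup (list_eq_dec Nat.eq_dec) (S1 ++ S2)).
    assert (HN : NoDup S) by apply NoDup_nodup.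
    assert (I1 : incl S1 S) by (intros w Hw; apply nodup_In, in_or_app; auto).
    assert (I2 : incl S2 S) by (intros w Hw; apply nodup_In, in_or_app; auto).
    specialize (H1 S HN I1); specialize (H2 S HN I2).
    apply Rabs_def2 in H1; apply Rabs_def2 in H2; lra.
Qed.

Lemma lsumR_add f g S : lsumR (fun w => f w + g w) S = lsumR f S + lsumR g S.
Proof. induction S; simpl; lra. Qed.

Lemma has_sumR_add f g a b : has_sumR f a -> has_sumR g b ->
  has_sumR (fun w => f w + g w) (a + b).
Proof.
  intros Ha Hb eps He.
  destruct (Ha (eps/2)) as [S1 H1]; [lra|].
  destruct (Hb (eps/2)) as [S2 H2]; [lra|].
  exists (S1 ++ S2). intros S HN HI.
  assert (I1 : incl S1 S) by (intros w Hw; apply HI, in_or_app; auto).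
  assert (I2 : incl S2 S) by (intros w Hw; apply HI, in_or_app; auto).
  specialize (H1 S HN I1). specialize (H2 S HN I2).
  rewrite lsumR_add. apply Rabs_def2 in H1. apply Rabs_def2 in H2.
  apply Rabs_def1; lra.
Qed.

Lemma lsumR_scale k f S : lsumR (fun w => k * f w) S = k * lsumR f S.
Proof. induction S; simpl; [ring|]. rewrite IHS; ring. Qed.

Lemma has_sumR_scale k f a : has_sumR f a -> has_sumR (fun w => k * f w) (k * a).
Proof.
  intros Ha eps He.
  assert (Hm : 0 <= Rabs k) by apply Rabs_pos.
  destruct (Ha (eps / (Rabs k + 1))) as [S0 H0].
  { apply Rdiv_lt_0_compat; lra. }
  exists S0. intros S HN HI. specialize (H0 S HN HI).
  rewrite lsumR_scale.
  replace (k * lsumR f S - k * a) with (k * (lsumR f S - a)) by ring.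
  rewrite Rabs_mult.
  set (t := eps / (Rabs k + 1)) in *.
  assert (Ht : eps = t * (Rabs k + 1)) by (unfold t; field; lra).
  assert (0 <= Rabs (lsumR f S - a)) by apply Rabs_pos.
  rewrite Ht. nra.
Qed.

Lemma has_sumR_ext f g a : (forall w, f w = g w) -> has_sumR f a -> has_sumR g a.
Proof. intros H. replace g with f by (apply functional_extensionality; auto). auto. Qed.

Definition piece (i : nat) (w : word) : list word :=
  match w with [] => [] | j :: w' => if Nat.eqb j i then [w'] else [] end.

Lemma in_strip i S w : In w (flat_map (piece i) S) <-> In (i :: w) S.
Proof.
  rewrite in_flat_map. split.
  - intros [x [Hx Hp]]. destruct x as [|j x]; simpl in Hp; [tauto|].
    destruct (Nat.eqb_spec j i); simpl in Hp; [|tauto].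
    destruct Hp as [Hp|[]]; subst; auto.
  - intros H. exists (i :: w). split; auto. simpl. rewrite Nat.eqb_refl. simpl; auto.
Qed.

Lemma has_sumR_shift i f s : has_sumR f s ->
  has_sumR (fun w => match w with [] => 0 | j :: w' => if Nat.eqb j i then f w' else 0 end) s.
Proof.
  intros H eps He. destruct (H eps He) as [S0 H0].
  exists (map (cons i) S0). intros S HN HI.
  set (T := flat_map (piece i) S).
  assert (E : lsumR (fun w => match w with [] => 0 | j :: w' => if Nat.eqb j i then f w' else 0 end) S = lsumR f T).
  { unfold T; clear. induction S as [|a S IH]; simpl; [reflexivity|].
    rewrite IH. destruct a as [|j a]; simpl; [ring|].
    destruct (Nat.eqb j i); simpl; ring. }
  rewrite E. apply H0.
  - unfold T. clear -HN. induction S as [|a S IH]; simpl; [constructor|].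
    inversion HN; subst. destruct a as [|j a]; simpl; auto.
    destruct (Nat.eqb_spec j i); simpl; auto. subst. constructor; auto.
    rewrite in_strip. auto.
  - intros w Hw. unfold T. apply in_strip. apply HI. apply in_map. auto.
Qed.

Lemma has_sumR_rev f s : has_sumR f s -> has_sumR (fun w => f (rev w)) s.
Proof.
  intros H eps He. destruct (H eps He) as [S0 H0].
  exists (map (@rev nat) S0). intros S HN HI.
  assert (E : lsumR (fun w => f (rev w)) S = lsumR f (map (@rev nat) S)).
  { clear. induction S; simpl; [reflexivity|]. rewrite IHS; reflexivity. }
  rewrite E. apply H0.
  - apply FinFun.Injective_map_NoDup; auto.
    intros a b Hab. rewrite <- (rev_involutive a), <- (rev_involutive b), Hab; auto.
  - intros w Hw. rewrite <- (rev_involutive w). apply in_map. apply HI.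
    apply in_map. auto.
Qed.

Lemma lsumR_perm f l l' : Permutation l l' -> lsumR f l = lsumR f l'.
Proof. induction 1; simpl; try lra. Qed.

Lemma lsumR_filter f S S' : (forall w, ~ In w S' -> f w = 0) ->
  lsumR f S = lsumR f (filter (fun w => if in_dec (list_eq_dec Nat.eq_dec) w S' then true else false) S).
Proof.
  intros Hf. induction S; simpl; [reflexivity|].
  destruct (in_dec (list_eq_dec Nat.eq_dec) a S'); simpl; rewrite IHS; auto.
  rewrite Hf; auto; ring.
Qed.

Lemma has_sumR_finite f S' : NoDup S' -> (forall w, ~ In w S' -> f w = 0) ->
  has_sumR f (lsumR f S').
Proof.
  intros HN Hf eps He. exists S'. intros S HS HI.
  rewrite (lsumR_filter f S S' Hf).
  rewrite (lsumR_perm f _ S').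
  - replace (lsumR f S' - lsumR f S') with 0 by ring. rewrite Rabs_R0; auto.
  - apply NoDup_Permutation; auto. apply NoDup_filter; auto.
    intros x; rewrite filter_In. split.
    + intros [_ H]. destruct (in_dec (list_eq_dec Nat.eq_dec) x S'); auto; discriminate.
    + intros H. split; auto. destruct (in_dec (list_eq_dec Nat.eq_dec) x S'); auto.
Qed.

Definition op0 : op := op_scale C0 op_id.
Definition Lpoly (T : list (Defs.C * word)) : op :=
  fold_right (fun cp A => op_add (op_scale (fst cp) (Lword (snd cp))) A) op0 T.
Definition Rpoly (T : list (Defs.C * word)) : op :=
  fold_right (fun cp A => op_add (op_scale (fst cp) (Rword (snd cp))) A) op0 T.

Lemma Lpoly_nil x : Lpoly [] x = vscale C0 x. Proof. reflexivity. Qed.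
Lemma Lpoly_cons c p T x : Lpoly ((c,p)::T) x = vadd (vscale c (Lword p x)) (Lpoly T x).
Proof. reflexivity. Qed.
Lemma Lword_cons i p x : Lword (i::p) x = Lop i (Lword p x). Proof. reflexivity. Qed.

Lemma vscale0 x : vscale C0 x = vzero.
Proof. apply functional_extensionality; intro w; unfold vscale, vzero; ceq. Qed.

Lemma Lop_add i x y : Lop i (vadd x y) = vadd (Lop i x) (Lop i y).
Proof.
  apply functional_extensionality; intro w; unfold Lop, vadd.
  destruct w; [ceq|]. destruct (Nat.eqb n i); [reflexivity|ceq].
Qed.
Lemma Lop_scale i c x : Lop i (vscale c x) = vscale c (Lop i x).
Proof.
  apply functional_extensionality; intro w; unfold Lop, vscale.
  destruct w; [ceq|]. destruct (Nat.eqb n i); [reflexivity|ceq].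
Qed.
Lemma Lop_zero i : Lop i vzero = vzero.
Proof.
  apply functional_extensionality; intro w; unfold Lop, vzero.
  destruct w; [reflexivity|]. destruct (Nat.eqb n i); reflexivity.
Qed.
Lemma Lword_add p x y : Lword p (vadd x y) = vadd (Lword p x) (Lword p y).
Proof. induction p; [reflexivity|]. rewrite !Lword_cons, IHp, Lop_add; auto. Qed.
Lemma Lword_scale p c x : Lword p (vscale c x) = vscale c (Lword p x).
Proof. induction p; [reflexivity|]. rewrite !Lword_cons, IHp, Lop_scale; auto. Qed.
Lemma Lword_zero p : Lword p vzero = vzero.
Proof. induction p; [reflexivity|]. rewrite !Lword_cons, IHp, Lop_zero; auto. Qed.
Lemma Lword_app p q x : Lword (p ++ q) x = Lword p (Lword q x).
Proof. induction p; [reflexivity|]. simpl app. rewrite !Lword_cons, IHp; auto. Qed.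

Lemma Lpoly_add T x y : Lpoly T (vadd x y) = vadd (Lpoly T x) (Lpoly T y).
Proof.
  induction T as [|[c p] T IH].
  - rewrite !Lpoly_nil, !vscale0. apply functional_extensionality; intro; unfold vadd, vzero; ceq.
  - rewrite !Lpoly_cons, IH, Lword_add. apply functional_extensionality; intro; unfold vadd, vscale; ceq.
Qed.
Lemma Lpoly_scale T c x : Lpoly T (vscale c x) = vscale c (Lpoly T x).
Proof.
  induction T as [|[d p] T IH].
  - rewrite !Lpoly_nil, !vscale0. apply functional_extensionality; intro; unfold vscale, vzero; ceq.
  - rewrite !Lpoly_cons, IH, Lword_scale. apply functional_extensionality; intro; unfold vadd, vscale; ceq.
Qed.

Lemma Lop_supported n i x : (i < n)%nat -> supported n x -> supported n (Lop i x).
Proof.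
  intros Hi Hx w Hw. unfold Lop. destruct w as [|j w]; [reflexivity|].
  destruct (Nat.eqb_spec j i); [|reflexivity]. subst. apply Hx.
  intro Hv. apply Hw. constructor; auto.
Qed.
Lemma Lword_supported n p x : valid_word n p -> supported n x -> supported n (Lword p x).
Proof.
  induction p; intros Hp Hx; [exact Hx|]. inversion Hp; subst.
  rewrite Lword_cons. apply Lop_supported; auto.
Qed.
Lemma Lpoly_supported n T x : Forall (fun cp => valid_word n (snd cp)) T ->
  supported n x -> supported n (Lpoly T x).
Proof.
  intros HT Hx. induction T as [|[c p] T IH].
  - rewrite Lpoly_nil, vscale0. intros w _; reflexivity.
  - inversion HT; subst. rewrite Lpoly_cons. intros w Hw. unfold vadd, vscale.
    rewrite (Lword_supported n p x), IH; auto. ceq.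
Qed.

Lemma Lop_norm i x r : hasnorm2 x r -> hasnorm2 (Lop i x) r.
Proof.
  rewrite !hasnorm2_iff. intros H. apply has_sumR_shift with (i := i) in H.
  eapply has_sumR_ext; [|exact H]. intros w. unfold Lop.
  destruct w; [unfold Cnorm2; simpl; ring|]. destruct (Nat.eqb n i); [reflexivity|unfold Cnorm2; simpl; ring].
Qed.
Lemma Lword_norm p x r : hasnorm2 x r -> hasnorm2 (Lword p x) r.
Proof. induction p; intros H; [exact H|]. rewrite Lword_cons. apply Lop_norm; auto. Qed.

Definition prefix (p w : word) : Prop := exists s, w = p ++ s.

Lemma Lword_notprefix p x w : ~ prefix p w -> Lword p x w = C0.
Proof.
  revert w. induction p as [|i p IH]; intros w H.
  - exfalso; apply H. exists w; reflexivity.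
  - rewrite Lword_cons. unfold Lop. destruct w as [|j w]; [reflexivity|].
    destruct (Nat.eqb_spec j i); [|reflexivity]. subst. apply IH.
    intros [s Hs]. apply H. exists s. simpl. rewrite Hs; reflexivity.
Qed.

Lemma Lpoly_notprefix T x w : (forall cp, In cp T -> ~ prefix (snd cp) w) -> Lpoly T x w = C0.
Proof.
  induction T as [|[c p] T IH]; intros H.
  - rewrite Lpoly_nil, vscale0; reflexivity.
  - rewrite Lpoly_cons. unfold vadd, vscale.
    rewrite Lword_notprefix, IH.
    + ceq.
    + intros cp Hcp; apply H; simpl; auto.
    + apply (H (c,p)); simpl; auto.
Qed.

Definition PFrel (a b : Defs.C * word) : Prop :=
  forall s, snd b <> snd a ++ s /\ snd a <> snd b ++ s.
Definition PF (T : list (Defs.C * word)) : Prop := ForallOrdPairs PFrel T.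

Definition sumc (T : list (Defs.C * word)) : R := fold_right (fun cp acc => Cnorm2 (fst cp) + acc) 0 T.

Lemma Cnorm2_add_disj a b : a = C0 \/ b = C0 -> Cnorm2 (Cadd a b) = Cnorm2 a + Cnorm2 b.
Proof. intros [H|H]; subst; unfold Cnorm2; simpl; ring. Qed.
Lemma Cnorm2_mul a b : Cnorm2 (Cmul a b) = Cnorm2 a * Cnorm2 b.
Proof. unfold Cnorm2; simpl; ring. Qed.

Lemma Lpoly_norm T x r : PF T -> hasnorm2 x r -> hasnorm2 (Lpoly T x) (sumc T * r).
Proof.
  intros HT Hx. induction T as [|[c p] T IH].
  - rewrite Lpoly_nil. rewrite hasnorm2_iff in *.
    simpl. replace (0 * r) with (Cnorm2 C0 * r) by (unfold Cnorm2; simpl; ring).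
    eapply has_sumR_ext; [|apply has_sumR_scale; exact Hx].
    intros w; unfold vscale; rewrite Cnorm2_mul; auto.
  - inversion HT as [|a l HF HT']; subst.
    specialize (IH HT').
    rewrite Lpoly_cons. pose proof (Lword_norm p x r Hx) as Hp.
    rewrite hasnorm2_iff in *.
    apply has_sumR_scale with (k := Cnorm2 c) in Hp.
    pose proof (has_sumR_add _ _ _ _ Hp IH) as Hs.
    simpl. replace ((Cnorm2 c + sumc T) * r) with (Cnorm2 c * r + sumc T * r) by ring.
    eapply has_sumR_ext; [|exact Hs].
    intros w. simpl. unfold vadd, vscale. rewrite Cnorm2_add_disj, Cnorm2_mul; auto.
    destruct (classic (prefix p w)) as [[s Hs0]|Hn].
    + right. apply Lpoly_notprefix. intros [d q] Hq [s' Hs'].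
      rewrite Forall_forall in HF. specialize (HF _ Hq). unfold PFrel in HF; simpl in HF.
      subst w. destruct (app_eq_app _ _ _ _ Hs') as [l [[H1 _]|[H1 _]]].
      * destruct (HF l); auto.
      * destruct (HF l); auto.
    + left. rewrite Lword_notprefix; auto. ceq.
Qed.

Lemma iso_of n (T : op) :
  (forall x y, T (vadd x y) = vadd (T x) (T y)) ->
  (forall c x, T (vscale c x) = vscale c (T x)) ->
  (forall x, supported n x -> supported n (T x)) ->
  (forall x r, hasnorm2 x r -> hasnorm2 (T x) r) -> isometry n T.
Proof.
  intros Ha Hs Hsu Hn. split; [|intros x r _; apply Hn].
  split; [|split; [|split]].
  - intros x [Hx [r Hr]]. split; auto. exists r; auto.
  - intros; auto.
  - intros; auto.
  - exists 1. split; [lra|]. intros x r r' _ Hr Hr'.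
    pose proof (Hn _ _ Hr) as H. rewrite hasnorm2_iff in *.
    rewrite (has_sumR_unique _ _ _ Hr' H). lra.
Qed.

Lemma Lpoly_iso n T : PF T -> Forall (fun cp => valid_word n (snd cp)) T -> sumc T = 1 ->
  isometry n (Lpoly T).
Proof.
  intros HP HV Hs. apply iso_of.
  - apply Lpoly_add.
  - apply Lpoly_scale.
  - intros; apply Lpoly_supported; auto.
  - intros x r H. pose proof (Lpoly_norm T x r HP H) as H'.
    rewrite Hs, Rmult_1_l in H'; exact H'.
Qed.

Definition revv (x : vec) : vec := fun w => x (rev w).
Lemma revv_revv x : revv (revv x) = x.
Proof. apply functional_extensionality; intro w; unfold revv; rewrite rev_involutive; auto. Qed.

Lemma Rop_rev i x : Rop i x = revv (Lop i (revv x)). Proof. reflexivity. Qed.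
Lemma Rword_rev q x : Rword q x = revv (Lword q (revv x)).
Proof.
  induction q as [|i q IH]; simpl.
  - symmetry; apply revv_revv.
  - change (Rop i (Rword q x) = revv (Lop i (Lword q (revv x)))).
    rewrite IH, Rop_rev, revv_revv. reflexivity.
Qed.
Lemma Rpoly_rev T x : Rpoly T x = revv (Lpoly T (revv x)).
Proof.
  induction T as [|[c p] T IH].
  - change (vscale C0 x = revv (vscale C0 (revv x))). rewrite !vscale0. reflexivity.
  - change (vadd (vscale c (Rword p x)) (Rpoly T x) = revv (vadd (vscale c (Lword p (revv x))) (Lpoly T (revv x)))).
    rewrite IH, Rword_rev. reflexivity.
Qed.

Lemma valid_rev n w : valid_word n w -> valid_word n (rev w).
Proof.
  unfold valid_word; rewrite !Forall_forall; intros H x Hx. apply H. apply in_rev; auto.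
Qed.
Lemma supported_revv n x : supported n x -> supported n (revv x).
Proof.
  intros H w Hw. unfold revv. apply H. intro Hv. apply Hw.
  rewrite <- (rev_involutive w). apply valid_rev; auto.
Qed.
Lemma norm_revv x r : hasnorm2 x r -> hasnorm2 (revv x) r.
Proof. rewrite !hasnorm2_iff. intro H. apply has_sumR_rev in H. exact H. Qed.

Lemma Rpoly_iso n T : PF T -> Forall (fun cp => valid_word n (snd cp)) T -> sumc T = 1 ->
  isometry n (Rpoly T).
Proof.
  intros HP HV Hs. apply iso_of.
  - intros x y. rewrite !Rpoly_rev. change (revv (vadd x y)) with (vadd (revv x) (revv y)).
    rewrite Lpoly_add. reflexivity.
  - intros c x. rewrite !Rpoly_rev. change (revv (vscale c x)) with (vscale c (revv x)).
    rewrite Lpoly_scale. reflexivity.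
  - intros x Hx. rewrite Rpoly_rev. apply supported_revv, Lpoly_supported, supported_revv; auto.
  - intros x r H. rewrite Rpoly_rev. apply norm_revv.
    pose proof (Lpoly_norm T (revv x) r HP (norm_revv _ _ H)) as H'.
    rewrite Hs, Rmult_1_l in H'; exact H'.
Qed.

Lemma alg_Lpoly n (S : op -> Prop) T : unital_algebra n S ->
  (forall G, (exists i, (i < n)%nat /\ G = Lop i) -> S G) ->
  Forall (fun cp => valid_word n (snd cp)) T -> S (Lpoly T).
Proof.
  intros [_ [Hid [Hadd [Hsc Hcomp]]]] Hgen HV.
  induction T as [|[c p] T IH].
  - apply Hsc, Hid.
  - inversion HV; subst. simpl in H1. apply Hadd; [apply Hsc|auto].
    clear -H1 Hid Hcomp Hgen. induction p as [|i p IHp]; [exact Hid|].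
    inversion H1; subst. apply Hcomp; auto. apply Hgen. exists i; auto.
Qed.
Lemma alg_Rpoly n (S : op -> Prop) T : unital_algebra n S ->
  (forall G, (exists i, (i < n)%nat /\ G = Rop i) -> S G) ->
  Forall (fun cp => valid_word n (snd cp)) T -> S (Rpoly T).
Proof.
  intros [_ [Hid [Hadd [Hsc Hcomp]]]] Hgen HV.
  induction T as [|[c p] T IH].
  - apply Hsc, Hid.
  - inversion HV; subst. simpl in H1. apply Hadd; [apply Hsc|auto].
    clear -H1 Hid Hcomp Hgen. induction p as [|i p IHp]; [exact Hid|].
    inversion H1; subst. apply Hcomp; auto. apply Hgen. exists i; auto.
Qed.
Lemma Lalg_Lpoly n T : PF T -> Forall (fun cp => valid_word n (snd cp)) T -> sumc T = 1 ->
  Lalg n (Lpoly T).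
Proof.
  intros HP HV Hs. split; [apply (Lpoly_iso n T); auto|].
  intros S HS _ Hgen. apply (alg_Lpoly n); auto.
Qed.
Lemma Ralg_Rpoly n T : PF T -> Forall (fun cp => valid_word n (snd cp)) T -> sumc T = 1 ->
  Ralg n (Rpoly T).
Proof.
  intros HP HV Hs. split; [apply (Rpoly_iso n T); auto|].
  intros S HS _ Hgen. apply (alg_Rpoly n); auto.
Qed.

Definition wdec := list_eq_dec Nat.eq_dec.
Lemma Lword_xi p : Lword p xi_empty = fun w => if wdec w p then C1 else C0.
Proof.
  apply functional_extensionality. induction p as [|i p IH]; intro w.
  - destruct w; simpl; [reflexivity|]. destruct (wdec (n :: w) []); [discriminate|reflexivity].
  - rewrite Lword_cons. unfold Lop. destruct w as [|j w].
    + destruct (wdec [] (i::p)); [discriminate|reflexivity].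
    + destruct (Nat.eqb_spec j i).
      * subst. rewrite IH. destruct (wdec w p), (wdec (i::w) (i::p)); subst; auto.
        -- exfalso; auto. -- exfalso; inversion e; auto.
      * destruct (wdec (j::w) (i::p)); [inversion e; exfalso; auto|reflexivity].
Qed.

Lemma revv_Lword_xi p : revv (Lword p xi_empty) = Lword (rev p) xi_empty.
Proof.
  rewrite !Lword_xi. apply functional_extensionality; intro w. unfold revv.
  destruct (wdec (rev w) p), (wdec w (rev p)); subst; auto.
  - exfalso; rewrite rev_involutive in n; auto.
  - exfalso; rewrite rev_involutive in n; auto.
Qed.

Definition mapw (f : word -> word) (T : list (Defs.C * word)) :=
  map (fun cp => (fst cp, f (snd cp))) T.

Lemma revv_Lpoly_xi T : revv (Lpoly T xi_empty) = Lpoly (mapw (@rev nat) T) xi_empty.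
Proof.
  induction T as [|[c p] T IH].
  - unfold mapw; cbn [map fst snd]. rewrite !Lpoly_nil, vscale0. reflexivity.
  - unfold mapw; cbn [map fst snd]. rewrite !Lpoly_cons. fold (mapw (@rev nat) T). rewrite <- IH, <- revv_Lword_xi. reflexivity.
Qed.

Lemma Lword_Lpoly q T z : Lword q (Lpoly T z) = Lpoly (mapw (fun p => q ++ p) T) z.
Proof.
  induction T as [|[c p] T IH].
  - unfold mapw; cbn [map fst snd]. rewrite !Lpoly_nil, vscale0, Lword_zero. reflexivity.
  - unfold mapw; cbn [map fst snd]. fold (mapw (fun p => q ++ p) T). rewrite !Lpoly_cons, Lword_add, Lword_scale, IH, Lword_app. reflexivity.
Qed.

Lemma xi_revv : revv xi_empty = xi_empty.
Proof.
  apply functional_extensionality; intro w; unfold revv, xi_empty.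
  destruct w as [|a w]; [reflexivity|]. simpl.
  destruct (rev w ++ [a]) eqn:E; [|reflexivity].
  apply app_eq_nil in E. destruct E; discriminate.
Qed.

Lemma Lpoly_expand (eta : vec) S : NoDup S ->
  forall w, Lpoly (map (fun w => (eta w, w)) S) xi_empty w =
    if in_dec wdec w S then eta w else C0.
Proof.
  induction S as [|a S IH]; intros HN w.
  - simpl. rewrite Lpoly_nil, vscale0. reflexivity.
  - inversion HN; subst. cbn [map]. rewrite Lpoly_cons. unfold vadd, vscale.
    rewrite IH; auto. rewrite Lword_xi.
    destruct (wdec w a); subst.
    + destruct (in_dec wdec a S); [exfalso; auto|].
      destruct (in_dec wdec a (a::S)); [|exfalso; simpl in *; auto]. ceq.
    + destruct (in_dec wdec w S), (in_dec wdec w (a :: S)).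
      * ceq.
      * exfalso; simpl in *; auto.
      * exfalso. destruct i; auto.
      * ceq.
Qed.

Lemma app_len_inv (x1 x2 y1 y2 : word) : length x1 = length y1 -> x1 ++ x2 = y1 ++ y2 -> x2 = y2.
Proof.
  intros HL HE. destruct (app_eq_app _ _ _ _ HE) as [l [[H1 H2]|[H1 H2]]]; subst;
  rewrite length_app in HL; destruct l; simpl in *; try lia; auto.
Qed.

Lemma lemX (a b N : nat) (l s : word) : a <> b -> l <> [] -> (length l <= N)%nat ->
  repeat a N ++ b :: s <> l ++ (repeat a N ++ [b]).
Proof.
  intros Hab Hl HN HE.
  set (k := length l) in *.
  assert (E1 : repeat a N = repeat a k ++ repeat a (N - k)).
  { rewrite <- repeat_app. f_equal. lia. }
  rewrite E1 in HE at 1. rewrite <- app_assoc in HE.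
  apply app_len_inv in HE; [|rewrite repeat_length; reflexivity].
  assert (E2 : repeat a N = repeat a (N - k) ++ repeat a k).
  { rewrite <- repeat_app. f_equal. lia. }
  rewrite E2, <- app_assoc in HE. apply app_inv_head in HE.
  destruct k eqn:Ek. { destruct l; [auto|discriminate]. }
  simpl in HE. inversion HE. auto.
Qed.

Definition uu (N : nat) : word := 1%nat :: repeat 0%nat N.
Definition PP (N : nat) (w : word) : word := uu N ++ (w ++ rev (uu N)).

Lemma rev_uu N : rev (uu N) = repeat 0%nat N ++ [1%nat].
Proof. unfold uu. simpl. rewrite rev_repeat. reflexivity. Qed.

Lemma key N w w' s : w <> w' -> (length w < N)%nat -> (length w' < N)%nat -> PP N w' <> PP N w ++ s.
Proof.
  intros Hne Hw Hw' HE. unfold PP in HE. rewrite <- !app_assoc in HE.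
  apply app_inv_head in HE. rewrite rev_uu in HE.
  symmetry in HE.
  destruct (app_eq_app _ _ _ _ HE) as [l [[H1 H2]|[H1 H2]]].
  - apply (f_equal (@length nat)) in H2. rewrite !length_app in H2.
    destruct l; simpl in H2; [|lia]. apply Hne. rewrite H1, app_nil_r; auto.
  - destruct l as [|c l]. { apply Hne. rewrite H1, app_nil_r; auto. }
    rewrite <- app_assoc in H2. simpl in H2.
    apply (lemX 0 1 N (c :: l) s); auto; [discriminate|].
    subst w'. rewrite length_app in Hw'. lia.
Qed.

Lemma rev_PP N w : rev (PP N w) = PP N (rev w).
Proof. unfold PP. rewrite !rev_app_distr, rev_involutive, app_assoc. reflexivity. Qed.

Lemma PF_map (f : word -> Defs.C * word) S : NoDup S ->
  (forall w w', In w S -> In w' S -> w <> w' -> PFrel (f w) (f w')) -> PF (map f S).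
Proof.
  induction S as [|a S IH]; intros HN H; simpl; constructor.
  - inversion HN; subst. rewrite Forall_forall. intros x Hx.
    apply in_map_iff in Hx. destruct Hx as [w [Hw1 Hw2]]; subst.
    apply H; simpl; auto. intro; subst; auto.
  - inversion HN; subst. apply IH; auto. intros; apply H; simpl; auto.
Qed.

Definition validb (n : nat) (w : word) : bool := forallb (fun i => Nat.ltb i n) w.
Lemma validb_spec n w : validb n w = true <-> valid_word n w.
Proof.
  unfold validb, valid_word. rewrite forallb_forall, Forall_forall.
  split; intros H x Hx; specialize (H x Hx); [apply Nat.ltb_lt|apply Nat.ltb_lt]; auto.
Qed.

Lemma sumc_map (eta : vec) g S : sumc (map (fun w => (eta w, g w)) S) = lsumR (fun w => Cnorm2 (eta w)) S.
Proof. induction S; simpl; [reflexivity|]. rewrite IHS; reflexivity. Qed.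

Definition sumlen (S : list word) : nat := fold_right (fun w acc => (length w + acc)%nat) 0%nat S.
Lemma sumlen_ge S w : In w S -> (length w <= sumlen S)%nat.
Proof. induction S; simpl; [tauto|]. intros [H|H]; subst; [lia|]. specialize (IHS H); lia. Qed.

Lemma valid_uu n N : (2 <= n)%nat -> valid_word n (uu N).
Proof.
  intros Hn. unfold uu, valid_word. constructor; [lia|].
  apply Forall_forall. intros x Hx. apply repeat_spec in Hx. lia.
Qed.

Lemma valid_PP n N w : (2 <= n)%nat -> valid_word n w -> valid_word n (PP N w).
Proof.
  intros Hn Hw. unfold PP, valid_word in *. apply Forall_app; split; [apply valid_uu; auto|].
  apply Forall_app; split; auto. apply valid_rev, valid_uu; auto.
Qed.

Theorem lemma4p3 (n : nat) (eta : vec) :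
  (2 <= n)%nat ->
  in_alg_span n eta ->
  hasnorm2 eta 1 ->
  exists (u v : word) (L Rr : op),
    valid_word n u /\ valid_word n v /\
    Lalg n L /\ isometry n L /\
    Ralg n Rr /\ isometry n Rr /\
    ranges_orthogonal n Rr (Rop 0) /\
    (forall w, Lword u (Rword v eta) w = L xi_empty w) /\
    (forall w, L xi_empty w = Rr xi_empty w).
Proof.
  intros Hn [Hsupp [S HS]] Hnorm.
  set (S' := filter (validb n) (nodup wdec S)).
  assert (HND : NoDup S') by (apply NoDup_filter, NoDup_nodup).
  assert (HVal : forall w, In w S' -> valid_word n w).
  { intros w Hw. unfold S' in Hw. apply filter_In in Hw. apply validb_spec; tauto. }
  assert (HZ : forall w, ~ In w S' -> eta w = C0).
  { intros w Hw. destruct (in_dec wdec w S) as [Hi|Hi]; [|apply HS; auto].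
    apply Hsupp. intro Hv. apply Hw. unfold S'. apply filter_In. split.
    - apply nodup_In; auto.
    - apply validb_spec; auto. }
  set (N := Datatypes.S (sumlen S')).
  assert (HL : forall w, In w S' -> (length w < N)%nat).
  { intros w Hw. unfold N. pose proof (sumlen_ge _ _ Hw). lia. }
  assert (Hsum : lsumR (fun w => Cnorm2 (eta w)) S' = 1).
  { apply (has_sumR_unique (fun w => Cnorm2 (eta w))).
    - apply has_sumR_finite; auto. intros w Hw. rewrite HZ; auto. unfold Cnorm2; simpl; ring.
    - apply hasnorm2_iff; auto. }
  set (TL := map (fun w => (eta w, PP N w)) S').
  set (TR := map (fun w => (eta w, PP N (rev w))) S').
  assert (PFL : PF TL).
  { apply PF_map; auto. intros w w' Hw Hw' Hne s; cbn [fst snd]. split; apply key; auto. }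
  assert (PFR : PF TR).
  { apply PF_map; auto. intros w w' Hw Hw' Hne s; cbn [fst snd].
    assert (rev w <> rev w') by (intro E; apply Hne; rewrite <- (rev_involutive w), E, rev_involutive; auto).
    split; apply key; auto; rewrite length_rev; auto. }
  assert (VL : Forall (fun cp => valid_word n (snd cp)) TL).
  { apply Forall_forall. intros cp Hcp. apply in_map_iff in Hcp. destruct Hcp as [w [<- Hw]].
    apply valid_PP; auto. }
  assert (VR : Forall (fun cp => valid_word n (snd cp)) TR).
  { apply Forall_forall. intros cp Hcp. apply in_map_iff in Hcp. destruct Hcp as [w [<- Hw]].
    apply valid_PP, valid_rev; auto. }
  assert (SL : sumc TL = 1) by (unfold TL; rewrite sumc_map; auto).
  assert (SR : sumc TR = 1) by (unfold TR; rewrite sumc_map; auto).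
  exists (uu N), (uu N), (Lpoly TL), (Rpoly TR).
  split; [apply valid_uu; auto|]. split; [apply valid_uu; auto|].
  split; [apply Lalg_Lpoly; auto|]. split; [apply Lpoly_iso; auto|].
  split; [apply Ralg_Rpoly; auto|]. split; [apply Rpoly_iso; auto|].
  split; [|split].
  - intros x y _ _. unfold hasinner.
    assert (HP : forall w, Cmul (Rpoly TR x w) (Cconj (Rop 0 y w)) = C0).
    { intros w. rewrite Rpoly_rev. unfold revv, Rop.
      destruct (rev w) as [|j t] eqn:E; [ceq|].
      destruct (Nat.eqb_spec j 0); [|ceq]. subst j.
      rewrite Lpoly_notprefix; [ceq|].
      intros cp Hcp [s Hs]. unfold TR in Hcp. apply in_map_iff in Hcp.
      destruct Hcp as [w0 [<- _]]. simpl in Hs. unfold PP, uu in Hs. simpl in Hs. discriminate. }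
    replace (fun w => Cmul (Rpoly TR x w) (Cconj (Rop 0 y w))) with (fun _ : word => C0)
      by (apply functional_extensionality; intro; rewrite HP; auto).
    intros eps He. exists []. intros S0 _ _.
    assert (E : lsum (fun _ => C0) S0 = C0).
    { induction S0; simpl; [reflexivity|]. rewrite IHS0. ceq. }
    rewrite E. unfold Cabs, Cnorm2; simpl.
    replace ((0 + - 0) * (0 + - 0) + (0 + - 0) * (0 + - 0)) with 0 by ring.
    rewrite sqrt_0; auto.
  - intros w. apply equal_f.
    assert (Eeta : eta = Lpoly (map (fun w => (eta w, w)) S') xi_empty).
    { apply functional_extensionality; intro w0. rewrite Lpoly_expand; auto.
      destruct (in_dec wdec w0 S'); auto. }
    replace (Rword (uu N) eta) with (Rword (uu N) (Lpoly (map (fun w => (eta w, w)) S') xi_empty))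
      by (rewrite <- Eeta; reflexivity).
    rewrite Rword_rev, revv_Lpoly_xi, Lword_Lpoly, revv_Lpoly_xi, Lword_Lpoly.
    f_equal. unfold TL, mapw. rewrite !map_map. apply map_ext. intros w0. cbn [fst snd].
    unfold PP. rewrite rev_app_distr, rev_involutive. reflexivity.
  - intros w. apply equal_f. rewrite Rpoly_rev, xi_revv, revv_Lpoly_xi.
    f_equal. unfold TL, TR, mapw. rewrite !map_map. apply map_ext. intros w0. cbn [fst snd].
    rewrite rev_PP, rev_involutive. reflexivity.
Qed.
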